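(* Let $\Theta$ be a hypergraph and $p:V(\Theta)\to\mathbb{R}^d$. The framework $(p,\Theta)$ is universally globally Euclideanly rigid if and only if it is universally locally Euclideanly rigid.
   Context: A hypergraph $\Theta$ has a finite vertex set $V$ and hyperedges that are subsets of $V$. In $\mathbb{R}^k$, frameworks $(p,\Theta),(q,\Theta)$ are Euclidean-equivalent if for each hyperedge $h$ some Euclidean isometry $g_h$ of $\mathbb{R}^k$ satisfies $g_h(p(u))=q(u)$ for $u\in h$, and Euclidean-congruent if one isometry $g$ of $\mathbb{R}^k$ satisfies $g(p(u))=q(u)$ for all $u$. A framework is globally Euclideanly rigid in $\mathbb{R}^k$ if every Euclidean-equivalent framework in $\mathbb{R}^k$ is Euclidean-congruent to it, and locally Euclideanly rigid in $\mathbb{R}^k$ if this holds for all equivalent frameworks whose configurations lie in some neighborhood of $p$ in $(\mathbb{R}^k)^V$. Viewing $\mathbb{R}^d\subset\mathbb{R}^{d'}$ ($d'\ge d$) as the first $d$ coordinates, $(p,\Theta)$ is universally globally (resp. locally) Euclideanly rigid if it is globally (resp. locally) Euclideanly rigid in $\mathbb{R}^{d'}$ for every $d'\ge d$. *)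

(* Defs.v *)
From HB Require Import structures.
From mathcomp Require Import all_boot all_order all_algebra.
From mathcomp Require Import reals.
Set Implicit Arguments. Unset Strict Implicit. Unset Printing Implicit Defensive.
Import Order.TTheory GRing.Theory Num.Theory.
Local Open Scope ring_scope.

Section Defs.
Variable R : realType.

Definition sqdist (k : nat) (x y : 'rV[R]_k) : R :=
  \sum_(i < k) (x ord0 i - y ord0 i) ^+ 2.

Definition isometry (k : nat) (g : 'rV[R]_k -> 'rV[R]_k) : Prop :=
  forall x y, sqdist (g x) (g y) = sqdist x y.

Definition hypergraph (V : finType) := {set {set V}}.

Definition eucl_equivalent (V : finType) (k : nat) (Th : hypergraph V)
    (p q : V -> 'rV[R]_k) : Prop :=
  forall h, h \in Th -> exists g, isometry g /\ forall u, u \in h -> g (p u) = q u.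

Definition eucl_congruent (V : finType) (k : nat) (p q : V -> 'rV[R]_k) : Prop :=
  exists g, isometry g /\ forall u, g (p u) = q u.

Definition globally_rigid (V : finType) (k : nat) (Th : hypergraph V)
    (p : V -> 'rV[R]_k) : Prop :=
  forall q, eucl_equivalent Th p q -> eucl_congruent p q.

(* Neighbourhood of p in (R^k)^V: a product of Euclidean balls of radius eps. *)
Definition locally_rigid (V : finType) (k : nat) (Th : hypergraph V)
    (p : V -> 'rV[R]_k) : Prop :=
  exists eps : R, 0 < eps /\
    forall q, (forall v, sqdist (q v) (p v) < eps) ->
      eucl_equivalent Th p q -> eucl_congruent p q.

(* R^d inside R^d' as the first d coordinates (other coordinates 0). *)
Definition embed (d d' : nat) (x : 'rV[R]_d) : 'rV[R]_d' :=
  \row_(j < d') odflt 0 (omap (fun i : 'I_d => x ord0 i) (insub (val j))).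

Definition univ_globally_rigid (V : finType) (d : nat) (Th : hypergraph V)
    (p : V -> 'rV[R]_d) : Prop :=
  forall d', (d <= d')%N -> globally_rigid Th (fun v => embed d' (p v)).

Definition univ_locally_rigid (V : finType) (d : nat) (Th : hypergraph V)
    (p : V -> 'rV[R]_d) : Prop :=
  forall d', (d <= d')%N -> locally_rigid Th (fun v => embed d' (p v)).

End Defs.

(* Main.v *)
Require Import Defs.
From HB Require Import structures.
From mathcomp Require Import all_boot all_order all_algebra.
From mathcomp Require Import reals ring lra.
Set Implicit Arguments. Unset Strict Implicit. Unset Printing Implicit Defensive.
Import Order.TTheory GRing.Theory Num.Theory.
Local Open Scope ring_scope.

Section Geo.
Variable R : realType.
Variable k : nat.
Implicit Types x y z u v w a b : 'rV[R]_k.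

Definition dot u v : R := \sum_(i < k) u ord0 i * v ord0 i.

Lemma dotC u v : dot u v = dot v u.
Proof. by apply: eq_bigr => i _; rewrite mulrC. Qed.

Lemma dotDl u v w : dot (u + v) w = dot u w + dot v w.
Proof. by rewrite /dot -big_split; apply: eq_bigr => i _; rewrite !mxE mulrDl. Qed.

Lemma dotNl u w : dot (- u) w = - dot u w.
Proof. by rewrite /dot -sumrN; apply: eq_bigr => i _; rewrite !mxE mulNr. Qed.

Lemma dotZl c u w : dot (c *: u) w = c * dot u w.
Proof. by rewrite /dot mulr_sumr; apply: eq_bigr => i _; rewrite !mxE mulrA. Qed.

Lemma dotBl u v w : dot (u - v) w = dot u w - dot v w.
Proof. by rewrite dotDl dotNl. Qed.

Lemma dotBr u v w : dot w (u - v) = dot w u - dot w v.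
Proof. by rewrite dotC dotBl !(dotC w). Qed.

Lemma dotZr c u w : dot w (c *: u) = c * dot w u.
Proof. by rewrite dotC dotZl dotC. Qed.

Lemma sqdistE x y : sqdist x y = dot (x - y) (x - y).
Proof. by apply: eq_bigr => i _; rewrite !mxE expr2. Qed.

Lemma dot_ge0 u : 0 <= dot u u.
Proof. by apply: sumr_ge0 => i _; rewrite -expr2 sqr_ge0. Qed.

Lemma dot_eq0 u : dot u u = 0 -> u = 0.
Proof.
move=> /eqP; rewrite psumr_eq0; last by move=> i _; rewrite -expr2 sqr_ge0.
move=> /allP H; apply/rowP => i; rewrite mxE.
have := H i (mem_index_enum _).
by move=> /implyP /(_ isT); rewrite mulf_eq0 orbb => /eqP.
Qed.


Lemma dotBB a b : dot (a - b) (a - b) = dot a a - 2 * dot a b + dot b b.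
Proof. rewrite !dotBl !dotBr (dotC b a); ring. Qed.

Definition refl x y z : 'rV[R]_k :=
  z - ((2 * dot z (y - x) - (dot y y - dot x x)) / dot (y - x) (y - x)) *: (y - x).

Lemma refl_iso x y : Defs.isometry (refl x y).
Proof.
move=> z z'; rewrite !sqdistE /refl.
set w := y - x; set n := dot w w; set C := dot y y - dot x x.
set kz := (2 * dot z w - C) / n; set kz' := (2 * dot z' w - C) / n.
have -> : z - kz *: w - (z' - kz' *: w) = (z - z') - (kz - kz') *: w.
  by rewrite scalerBl; set A := kz *: w; set B := kz' *: w; rewrite opprD opprK opprD opprK !addrA; congr (_ + _); rewrite addrAC.
have -> : kz - kz' = 2 * dot (z - z') w / n.
  by rewrite /kz /kz' dotBl -mulrBl; congr (_ * _); ring.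
rewrite [LHS]dotBB !dotZr !dotZl -/n.
have [->|n0] := eqVneq n 0; first by rewrite invr0 !mulr0 !mul0r mulr0 subr0 addr0.
by field.
Qed.

Lemma refl_fix x y z : sqdist z x = sqdist z y -> refl x y z = z.
Proof.
rewrite !sqdistE !dotBB /refl => h.
suff -> : 2 * dot z (y - x) - (dot y y - dot x x) = 0 by rewrite mul0r scale0r subr0.
rewrite dotBr; lra.
Qed.

Lemma refl_map x y : refl x y x = y.
Proof.
rewrite /refl.
have -> : 2 * dot x (y - x) - (dot y y - dot x x) = - dot (y - x) (y - x).
  by rewrite dotBB dotBr (dotC y x); ring.
have [n0|n0] := eqVneq (dot (y - x) (y - x)) 0.
  by move/dot_eq0/eqP: (n0); rewrite subr_eq0 => /eqP <-; rewrite subrr scaler0 subr0.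
by rewrite mulNr divff // scaleN1r opprK addrC subrK.
Qed.

Lemma extend (I : eqType) (s : seq I) (X Y : I -> 'rV[R]_k) :
  (forall i j, i \in s -> j \in s -> sqdist (X i) (X j) = sqdist (Y i) (Y j)) ->
  exists g, Defs.isometry g /\ forall i, i \in s -> g (X i) = Y i.
Proof.
elim: s => [|a s IH] H.
  by exists id; split => //; move=> ? ?.
have [g [gi gs]] : exists g, Defs.isometry g /\ forall i, i \in s -> g (X i) = Y i.
  by apply: IH => i j hi hj; apply: H; rewrite inE ?hi ?hj orbT.
exists (refl (g (X a)) (Y a) \o g); split.
  by move=> z z' /=; rewrite refl_iso gi.
move=> i; rewrite inE => /orP [/eqP ->|hi] /=; first by rewrite refl_map.
rewrite (gs i hi); apply: refl_fix; rewrite -{1}(gs i hi) gi.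
by apply: H; rewrite inE ?hi ?eqxx ?orbT.
Qed.

End Geo.
Section Main.
Variable R : realType.

Lemma sqdist_row m n (a a' : 'rV[R]_m) (b b' : 'rV[R]_n) :
  sqdist (row_mx a b) (row_mx a' b') = sqdist a a' + sqdist b b'.
Proof. rewrite /sqdist big_split_ord /=; congr (_ + _); apply: eq_bigr => i _; by rewrite ?row_mxEl ?row_mxEr. Qed.

Lemma sqdistZZ n (c c' : R) (a : 'rV[R]_n) :
  sqdist (c *: a) (c' *: a) = (c - c') ^+ 2 * sqdist a 0.
Proof. rewrite /sqdist mulr_sumr; apply: eq_bigr => i _; rewrite !mxE; ring. Qed.

Lemma sqdistZ n (c : R) (a b : 'rV[R]_n) :
  sqdist (c *: a) (c *: b) = c ^+ 2 * sqdist a b.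
Proof. rewrite /sqdist mulr_sumr; apply: eq_bigr => i _; rewrite !mxE; ring. Qed.

Lemma sqdist00 n : sqdist (0 : 'rV[R]_n) 0 = 0.
Proof. by rewrite /sqdist big1 // => i _; rewrite !mxE subrr expr0n. Qed.

Lemma sqdist_ge0 n (a b : 'rV[R]_n) : 0 <= sqdist a b.
Proof. by apply: sumr_ge0 => i _; rewrite sqr_ge0. Qed.

Lemma embed_split d d' (x : 'rV[R]_d) : (d <= d')%N ->
  embed (d' + d') x = row_mx (embed d' x) 0.
Proof.
move=> dd; apply/rowP => j; rewrite !mxE.
case: splitP => [l jl|l jl].
  by have -> : val j = l := jl; rewrite mxE.
have -> : val j = (d' + l)%N := jl.
rewrite mxE insubN //= -leqNgt; apply: leq_trans dd _; exact: leq_addr.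
Qed.

Lemma sqdistZ0 n (c : R) (a : 'rV[R]_n) :
  sqdist (c *: a) 0 = c ^+ 2 * sqdist a 0.
Proof. rewrite /sqdist mulr_sumr; apply: eq_bigr => i _; rewrite !mxE; ring. Qed.

Lemma choose_cs (eps M : R) : 0 < eps -> 0 < M -> exists c s : R,
  [/\ c ^+ 2 + s ^+ 2 = 1, s != 0 &
   forall a b, 0 <= a -> 0 <= b -> a + b <= M -> (c - 1) ^+ 2 * a + s ^+ 2 * b < eps].
Proof.
move=> e0 M0.
set t := eps / (8 * M + eps).
have D0 : 0 < 8 * M + eps by lra.
have t0 : 0 < t by rewrite divr_gt0.
have t1 : t < 1 by rewrite ltr_pdivrMr // mul1r; lra.
have tM : t * (8 * M) <= eps.
  rewrite /t mulrAC ler_pdivrMr // ler_wpM2l //; lra.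
clearbody t.
set D := 1 + t ^+ 2.
have Dp : 0 < D by rewrite /D; nra.
exists ((1 - t ^+ 2) / D), (2 * t / D); split.
- rewrite !expr_div_n -mulrDl; have -> : (1 - t ^+ 2) ^+ 2 + (2 * t) ^+ 2 = D ^+ 2 by rewrite /D; ring.
  by rewrite divff // sqrf_eq0 gt_eqF.
- by rewrite !mulf_eq0 invr_eq0 (gt_eqF t0) (gt_eqF Dp) pnatr_eq0.
move=> a b a0 b0 ab.
have h1 : (1 - t ^+ 2) / D - 1 = - (2 * t ^+ 2) / D.
  by rewrite /D; field; rewrite -/D gt_eqF.
have hc : (- (2 * t ^+ 2) / D) ^+ 2 <= 4 * t ^+ 2.
  rewrite expr_div_n ler_pdivrMr ?exprn_gt0 // /D; nra.
have hs : (2 * t / D) ^+ 2 <= 4 * t ^+ 2.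
  rewrite expr_div_n ler_pdivrMr ?exprn_gt0 // /D; nra.
rewrite h1.
set X := (- (2 * t ^+ 2) / D) ^+ 2 in hc *; set Y := (2 * t / D) ^+ 2 in hs *.
have X0 : 0 <= X by rewrite /X sqr_ge0.
have Y0 : 0 <= Y by rewrite /Y sqr_ge0.
nra.
Qed.

End Main.

Theorem lemma2p11 (R : realType) (V : finType) (d : nat) (Th : hypergraph V)
    (p : V -> 'rV[R]_d) :
  univ_globally_rigid Th p <-> univ_locally_rigid Th p.
Proof.
split.
  move=> H d' dd; exists 1; split; first exact: ltr01.
  by move=> q _; apply: H.
move=> H d' dd q Heq.
have dD : (d <= d' + d')%N by apply: leq_trans dd (leq_addr _ _).
have [eps [eps0 Hl]] := H (d' + d')%N dD.
pose P v := embed d' (p v).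
pose M : R := 1 + \sum_v (sqdist (P v) 0 + sqdist (q v) 0).
have sum0 : 0 <= \sum_v (sqdist (P v) 0 + sqdist (q v) 0).
  by apply: sumr_ge0 => v _; rewrite addr_ge0 // sqdist_ge0.
have M0 : 0 < M by rewrite /M; lra.
have Mv : forall v, sqdist (P v) 0 + sqdist (q v) 0 <= M.
  move=> v; rewrite /M (bigD1 v) //=.
  have : 0 <= \sum_(i | i != v) (sqdist (P i) 0 + sqdist (q i) 0).
    by apply: sumr_ge0 => i _; rewrite addr_ge0 // sqdist_ge0.
  lra.
have [c [s [hcs hs hsmall]]] := choose_cs eps0 M0.
pose r v := row_mx (c *: P v) (s *: q v).
have Eeq : eucl_equivalent Th (fun v => embed (d' + d') (p v)) r.
  move=> h hh; have [g [gi gh]] := Heq h hh.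
  have dh : forall i j, i \in enum h -> j \in enum h ->
      sqdist (embed (d' + d') (p i)) (embed (d' + d') (p j)) = sqdist (r i) (r j).
    move=> i j; rewrite !mem_enum => hi hj.
    rewrite !embed_split // !sqdist_row sqdist00 addr0 !sqdistZ.
    rewrite -(gh i hi) -(gh j hj) gi -/(P i) -/(P j) -mulrDl hcs mul1r.
    by [].
  have [G [Gi GE]] := extend dh.
  by exists G; split => // u hu; apply: GE; rewrite mem_enum.
have close : forall v, sqdist (r v) (embed (d' + d') (p v)) < eps.
  move=> v; rewrite embed_split // sqdist_row -/(P v).
  rewrite -{2}(scale1r (P v)) sqdistZZ sqdistZ0.
  by apply: hsmall; rewrite ?sqdist_ge0 ?Mv.
have [G [Gi GE]] := Hl r close Eeq.
have dist : forall u v, sqdist (P u) (P v) = sqdist (q u) (q v).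
  move=> u v; have := Gi (embed (d' + d') (p u)) (embed (d' + d') (p v)).
  rewrite !GE !embed_split // !sqdist_row sqdist00 addr0 !sqdistZ -/(P u) -/(P v).
  move=> e; have hs2 : s ^+ 2 != 0 by rewrite sqrf_eq0.
  apply: (mulfI hs2).
  have hc : c ^+ 2 = 1 - s ^+ 2 by lra.
  rewrite hc in e; move: e.
  set a := sqdist (P u) (P v); set b := sqdist (q u) (q v).
  move=> e /=.
  transitivity (s ^+ 2 * a + ((1 - s ^+ 2) * a + s ^+ 2 * b - a)); first by rewrite e; ring.
  ring.
have [g [gi gs]] := @extend R d' V (enum V) P q (fun i j _ _ => dist i j).
by exists g; split => // u; apply: gs; rewrite mem_enum.
Qed.
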